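(* Let $G$ be a group with finite presentation $\mathcal P=\langle t,\mathcal A:\mathcal R,\ t^{-1}at=\phi(a)\ (a\in\mathcal A)\rangle$, $A=\langle\mathcal A\rangle\le G$, and $X$ its Cayley 2-complex. Let $C$ be a finite subcomplex of $X$, with $N(C)$ and $M(v,C)$ as in the context, and let $M(C)=\max\{M(v,C): v \text{ a vertex of } C\}$. Then every vertex $v\in C$ lies in $(t^{N(C)}At^{-N(C)})\,(t^{N(C)}\{1,t^{-1},\dots,t^{-M(C)}\})$. Moreover, for positive integers $M,N$ and any $w\in(t^NAt^{-N})(t^N\{1,t^{-1},\dots,t^{-M}\})$, we have $wA\subset(t^NAt^{-N})(t^N\{1,t^{-1},\dots,t^{-M}\})$.
   Context: $\mathcal A$ is finite, $\mathcal R\subset F(\mathcal A)$ finite, $\phi:F(\mathcal A)\to F(\mathcal A)$ a homomorphism. The Cayley 2-complex $X$ has vertex set $G$. For each vertex $v$ of $C$ write $v=t^{n(v)}a_vt^{-m(v)}$ with $a_v\in A$, $n(v),m(v)\ge0$; $N(C)=\max\{n(v):v\in C\}$ and $M(v,C)=N(C)-n(v)+m(v)$. Note $(t^NAt^{-N})(t^N\{1,\dots,t^{-M}\})=\{t^Nat^{-m}:a\in A,\ 0\le m\le M\}$. *)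

(* Defs.v *)
From mathcomp Require Import all_boot.
From Stdlib Require List.
Set Implicit Arguments. Unset Strict Implicit. Unset Printing Implicit Defensive.

Record group := Group {
  gcar :> Type;
  gmul : gcar -> gcar -> gcar;
  ginv : gcar -> gcar;
  gone : gcar;
  gmulA : forall x y z, gmul x (gmul y z) = gmul (gmul x y) z;
  gmul1 : forall x, gmul gone x = x;
  gmulV : forall x, gmul (ginv x) x = gone
}.

Fixpoint gpow (G : group) (x : G) (k : nat) : G :=
  if k is k'.+1 then gmul x (gpow x k') else gone G.

(* Words in the free group F(I): letters (i, b) with b = true meaning i^{-1}. *)
Definition word (I : Type) := seq (I * bool).

Definition eval_letter (I : Type) (G : group) (f : I -> G) (l : I * bool) : G :=
  if l.2 then ginv (f l.1) else f l.1.

Fixpoint eval (I : Type) (G : group) (f : I -> G) (w : word I) : G :=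
  if w is l :: w' then gmul (eval_letter f l) (eval f w') else gone G.

Definition winv (I : Type) (w : word I) : word I :=
  rev (map (fun l => (l.1, ~~ l.2)) w).

(* f : I -> G together with relators rels is a presentation of G:
   the relators hold, the generators generate G, and every relation
   holding in G is a consequence of rels (universal property of F(I)/<<rels>>). *)
Definition presents (I : Type) (G : group) (f : I -> G) (rels : seq (word I)) : Prop :=
  [/\ (forall r, List.In r rels -> eval f r = gone G),
      (forall g : G, exists w : word I, eval f w = g) &
      (forall (H : group) (h : I -> H),
          (forall r, List.In r rels -> eval h r = gone H) ->
          forall w1 w2 : word I, eval f w1 = eval f w2 -> eval h w1 = eval h w2)].

(* Generators t (None) and a (Some a), a in the alphabet cA. *)
Definition lift (cA : Type) (w : word cA) : word (option cA) :=
  map (fun l => (Some l.1, l.2)) w.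

(* relator  t^{-1} a t phi(a)^{-1}  ; phi : F(cA) -> F(cA) is the homomorphism
   determined by its values phi a on the generators. *)
Definition hnn_relator (cA : Type) (phi : cA -> word cA) (a : cA) : word (option cA) :=
  [:: (None, true); (Some a, false); (None, false)] ++ winv (lift (phi a)).

Definition hnn_relators (cA : finType) (R : seq (word cA)) (phi : cA -> word cA)
  : seq (word (option cA)) :=
  map (@lift cA) R ++ map (hnn_relator phi) (enum cA).

Definition in_A (cA : Type) (G : group) (iota : cA -> G) (x : G) : Prop :=
  exists w : word cA, eval iota w = x.

Definition in_prodset (cA : Type) (G : group) (iota : cA -> G) (t : G) (N M : nat)
  (w : G) : Prop :=
  exists x y : G,
    (exists a, in_A iota a /\ x = gmul (gpow t N) (gmul a (ginv (gpow t N)))) /\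
    (exists k, k <= M /\ y = gmul (gpow t N) (ginv (gpow t k))) /\
    w = gmul x y.

Definition gen_map (cA : Type) (G : group) (t : G) (iota : cA -> G) (i : option cA) : G :=
  if i is Some a then iota a else t.

(* Main.v *)
Require Import Defs.
From mathcomp Require Import all_boot.
From Stdlib Require List.

Section GroupFacts.
Variable G : group.
Local Notation "x * y" := (@gmul G x y).
Local Notation "x ^-1" := (@ginv G x).
Local Notation "1" := (gone G).

Lemma gmulV' (x : G) : x * x^-1 = 1.
Proof.
rewrite -{1}(gmul1 (x * x^-1)) -{1}(gmulV (x^-1)) -!gmulA (gmulA (x^-1) x).
by rewrite gmulV gmul1 gmulV.
Qed.

Lemma gmul1' (x : G) : x * 1 = x.
Proof. by rewrite -(gmulV x) gmulA gmulV' gmul1. Qed.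

Lemma gKV (x y : G) : x^-1 * (x * y) = y.
Proof. by rewrite gmulA gmulV gmul1. Qed.

Lemma gVK (x y : G) : x * (x^-1 * y) = y.
Proof. by rewrite gmulA gmulV' gmul1. Qed.

Lemma ginv_uniq (x y : G) : x * y = 1 -> y = x^-1.
Proof. by move=> h; rewrite -(gKV x y) h gmul1'. Qed.

Lemma ginvM (x y : G) : (x * y)^-1 = y^-1 * x^-1.
Proof.
symmetry; apply: ginv_uniq.
by rewrite -gmulA gVK gmulV'.
Qed.

Lemma ginvK (x : G) : (x^-1)^-1 = x.
Proof. symmetry; apply: ginv_uniq; exact: gmulV. Qed.

Lemma ginv1 : (1 : G)^-1 = 1.
Proof. symmetry; apply: ginv_uniq; exact: gmul1. Qed.

Lemma gpowD (t : G) a b : gpow t (a + b) = gpow t a * gpow t b.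
Proof.
elim: a => [|a IH] /=; first by rewrite gmul1.
by rewrite IH gmulA.
Qed.

Lemma eval_cat I (f : I -> G) (w1 w2 : word I) :
  eval f (w1 ++ w2) = eval f w1 * eval f w2.
Proof.
elim: w1 => [|l w IH] /=; first by rewrite gmul1.
by rewrite IH gmulA.
Qed.

Lemma eval_rcons I (f : I -> G) (w : word I) l :
  eval f (rcons w l) = eval f w * eval_letter f l.
Proof. by rewrite -cats1 eval_cat /= gmul1'. Qed.

Lemma eval_winv I (f : I -> G) (w : word I) : eval f (winv w) = (eval f w)^-1.
Proof.
elim: w => [|l w IH] /=; first by rewrite ginv1.
rewrite /winv map_cons rev_cons eval_rcons -/(winv w) IH ginvM.
congr (_ * _); rewrite /eval_letter /=.
by case: l.2 => //=; rewrite ginvK.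
Qed.

End GroupFacts.

Lemma eval_lift (cA : Type) (G : group) (t : G) (iota : cA -> G) (w : word cA) :
  eval (gen_map t iota) (Defs.lift w) = eval iota w.
Proof. by elim: w => [|l w IH] //=; rewrite IH. Qed.

Lemma in_A_mul (cA : Type) (G : group) (iota : cA -> G) x y :
  in_A iota x -> in_A iota y -> in_A iota (gmul x y).
Proof. by move=> [w1 <-] [w2 <-]; exists (w1 ++ w2); rewrite eval_cat. Qed.

Lemma in_A_inv (cA : Type) (G : group) (iota : cA -> G) x :
  in_A iota x -> in_A iota (ginv x).
Proof. by move=> [w <-]; exists (winv w); rewrite eval_winv. Qed.

Lemma memIn (T : eqType) (x : T) (s : seq T) : x \in s -> List.In x s.
Proof.
elim: s => [|y s IH] //=; rewrite in_cons => /orP [/eqP ->|h]; first by left.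
by right; exact: IH.
Qed.

Lemma in_A_conj (cA : finType) (R : seq (word cA)) (phi : cA -> word cA)
  (G : group) (t : G) (iota : cA -> G)
  (HP : presents (gen_map t iota) (hnn_relators R phi)) k x :
  in_A iota x -> in_A iota (gmul (ginv (gpow t k)) (gmul x (gpow t k))).
Proof.
have key : forall a, gmul (ginv t) (gmul (iota a) t) = eval iota (phi a).
  move=> a; case: HP => Hr _ _.
  have : List.In (hnn_relator phi a) (hnn_relators R phi).
    rewrite /hnn_relators; apply List.in_or_app; right.
    apply List.in_map; apply: memIn; by rewrite mem_enum.
  move/Hr; rewrite /hnn_relator eval_cat eval_winv eval_lift /= /eval_letter /=.
  rewrite gmul1' -!gmulA => h.
  have := f_equal (fun z => gmul z (eval iota (phi a))) h.
  by rewrite gmul1 -!gmulA gmulV gmul1'.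
have conj1 : forall y, in_A iota y -> in_A iota (gmul (ginv t) (gmul y t)).
  move=> y [w <-]; elim: w => [|l w IH] /=.
    by exists [::]; rewrite /= gmul1 gmulV.
  have -> : gmul (ginv t) (gmul (gmul (eval_letter iota l) (eval iota w)) t) =
            gmul (gmul (ginv t) (gmul (eval_letter iota l) t))
                 (gmul (ginv t) (gmul (eval iota w) t)).
    by rewrite -!gmulA gVK.
  apply: in_A_mul => //.
  rewrite /eval_letter; case: l.2.
    have -> : gmul (ginv t) (gmul (ginv (iota l.1)) t) =
              ginv (gmul (ginv t) (gmul (iota l.1) t)).
      by rewrite !ginvM ginvK gmulA.
    by apply: in_A_inv; rewrite key; exists (phi l.1).
  by rewrite key; exists (phi l.1).
elim: k x => [|k IH] x Hx /=.
  by rewrite ginv1 gmul1 gmul1'.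
rewrite ginvM -!gmulA (gmulA (ginv t)) (gmulA (gmul (ginv t) x)) -(gmulA (ginv t)).
by apply: IH; apply: conj1.
Qed.

Lemma max_in (G : Type) (F : G -> nat) (V : seq G) v :
  List.In v V -> F v <= \max_(x <- V) F x.
Proof.
elim: V => [|u V IH] //= [->|h]; rewrite big_cons.
  exact: leq_maxl.
exact: leq_trans (IH h) (leq_maxr _ _).
Qed.

Theorem lemma5p3 (cA : finType) (R : seq (word cA)) (phi : cA -> word cA)
  (G : group) (t : G) (iota : cA -> G)
  (HP : presents (gen_map t iota) (hnn_relators R phi))
  (V : seq G)                         (* vertex set of the finite subcomplex C *)
  (n m : G -> nat) (av : G -> G)      (* chosen decompositions v = t^n(v) a_v t^-m(v) *)
  (Hdec : forall v, List.In v V ->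
      in_A iota (av v) /\
      v = gmul (gpow t (n v)) (gmul (av v) (ginv (gpow t (m v))))) :
  let NC := \max_(v <- V) n v in
  let MC := \max_(v <- V) (NC - n v + m v) in
  (forall v, List.In v V -> in_prodset iota t NC MC v) /\
  (forall M N : nat, 0 < M -> 0 < N ->
     forall w : G, in_prodset iota t N M w ->
     forall a : G, in_A iota a -> in_prodset iota t N M (gmul w a)).
Proof.
move=> NC MC; split.
  move=> v Hv; have [HA Hv'] := Hdec v Hv.
  have hn : n v <= NC by move: Hv; rewrite /NC; exact: max_in.
  have hk : NC - n v + m v <= MC by exact: (@max_in G (fun x => NC - n x + m x) V v Hv).
  set d := NC - n v.
  have eNC : NC = n v + d by rewrite /d subnKC.
  exists (gmul (gpow t NC) (gmul (gmul (ginv (gpow t d)) (gmul (av v) (gpow t d)))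
                              (ginv (gpow t NC)))).
  exists (gmul (gpow t NC) (ginv (gpow t (d + m v)))).
  split; first by exists (gmul (ginv (gpow t d)) (gmul (av v) (gpow t d)));
    split => //; exact: (@in_A_conj _ _ _ _ _ _ HP _ _ HA).
  split; first by exists (d + m v).
  apply: (etrans Hv'); rewrite -!gmulA gKV addnC gpowD ginvM eNC gpowD -!gmulA gVK.
  by rewrite gVK.
move=> M N _ _ w [x [y [[a [Ha ->]] [[k [hk ->]] ->]]]] a' Ha'.
exists (gmul (gpow t N) (gmul (gmul a (gmul (ginv (gpow t k)) (gmul a' (gpow t k))))
                              (ginv (gpow t N)))).
exists (gmul (gpow t N) (ginv (gpow t k))).
split.
  exists (gmul a (gmul (ginv (gpow t k)) (gmul a' (gpow t k)))); split => //.
  by apply: in_A_mul => //; exact: (@in_A_conj _ _ _ _ _ _ HP _ _ Ha').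
split; first by exists k.
rewrite -!gmulA gKV gKV.
  by rewrite gmulV' gmul1'.
Qed.
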